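(* Let $\mu$ be a probability measure on $\mathbb{R}^n$ that is $\alpha$-regular for some $\alpha\geq 1$. Then for every $t\geq 2$, $$B_t(\mu)\subseteq 4e\alpha\, Z_t(\mu).$$
   Context: $\mu$ is $\alpha$-regular if for all $s\geq t\geq 2$ and all $v\in\mathbb{R}^n$, $\left(\int|\langle v,x\rangle|^s d\mu(x)\right)^{1/s}\leq \alpha\frac{s}{t}\left(\int|\langle v,x\rangle|^t d\mu(x)\right)^{1/t}$. $\Lambda_\mu(v)=\ln\int e^{\langle v,x\rangle}d\mu(x)$ and the Cramér transform is $\Lambda_\mu^*(v)=\sup_{u\in\mathbb{R}^n}\{\langle v,u\rangle-\Lambda_\mu(u)\}$; $B_t(\mu)=\{v:\Lambda^*_\mu(v)\leq t\}$. $Z_t(\mu)$ is the convex body with support function $h_{Z_t(\mu)}(y)=\left(\int|\langle x,y\rangle|^t d\mu(x)\right)^{1/t}$; equivalently $Z_t(\mu)=\{x: |\langle v,x\rangle|^t\leq \int|\langle v,y\rangle|^t d\mu(y)\ \forall v\}$. *)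

(* Defs.v *)
From HB Require Import structures.
From mathcomp Require Import all_boot all_order all_algebra.
From mathcomp Require Import all_classical all_reals all_analysis.
Set Implicit Arguments. Unset Strict Implicit. Unset Printing Implicit Defensive.
Import Order.TTheory GRing.Theory Num.Theory.
Import numFieldNormedType.Exports.
Local Open Scope classical_set_scope.
Local Open Scope ring_scope.

(* R^n as row vectors 'rV[R]_n, equipped with its Borel sigma-algebra
   (generated by the open sets of the product/matrix topology). *)
Definition Rn (R : realType) (n : nat) :=
  g_sigma_algebraType [set A : set 'rV[R]_n | open A].

Definition dotp (R : realType) (n : nat) (u v : 'rV[R]_n) : R :=
  \sum_(i < n) u ord0 i * v ord0 i.

Section Defs.
Variables (R : realType) (n : nat) (mu : probability (Rn R n) R).
Local Open Scope ereal_scope.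

(* Lambda_mu(u) = ln \int e^{<u,x>} dmu(x)  (= +oo if the integral is infinite) *)
Definition logLaplace (u : 'rV[R]_n) : \bar R :=
  match \int[mu]_x (expR (dotp u x))%:E with
  | r%:E => (ln r)%:E
  | _ => +oo
  end.

Definition cramer (v : 'rV[R]_n) : \bar R :=
  ereal_sup [set (dotp v u)%:E - logLaplace u | u in [set: 'rV[R]_n]].

Definition Bt (t : R) : set 'rV[R]_n := [set v | cramer v <= t%:E].

Definition moment (t : R) (v : 'rV[R]_n) : \bar R :=
  \int[mu]_x (`|dotp v x| `^ t)%:E.

Definition Zt (t : R) : set 'rV[R]_n :=
  [set x | forall v : 'rV[R]_n, (`|dotp v x| `^ t)%:E <= moment t v].

Definition regular (alpha : R) : Prop :=
  forall (s t : R), (2 <= t)%R -> (t <= s)%R -> forall v : 'rV[R]_n,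
    moment s v `^ (s^-1)%R <= (alpha * s / t)%:E * moment t v `^ (t^-1)%R.

End Defs.

(* Main.v *)
Require Import Defs.
From HB Require Import structures.
From mathcomp Require Import all_boot all_order all_algebra.
From mathcomp Require Import all_classical all_reals all_analysis.
From mathcomp Require Import measurable_realfun.
From mathcomp Require Import ring lra.
Import Order.TTheory GRing.Theory Num.Theory.
Import numFieldNormedType.Exports.
Local Open Scope classical_set_scope.
Local Open Scope ring_scope.

Lemma cont_meas (R : realType) n (f : 'rV[R]_n -> R) :
  continuous f -> measurable_fun (setT : set (Rn R n)) f.
Proof.
move=> cf; apply: (measurability _ (measurable_realfun.RGenOpens.measurableE R)).
move=> _ [_ [a [b ->]] <-].
apply: sub_sigma_algebra; rewrite setTI /=.
by move/continuousP: cf; apply; exact: interval_open.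
Qed.

Lemma dotp_meas (R : realType) n (u : 'rV[R]_n) :
  measurable_fun (setT : set (Rn R n)) (dotp u).
Proof.
rewrite /dotp; apply: measurable_sum => i.
apply: measurable_realfun.measurable_funM; first exact: measurable_cst.
apply: cont_meas; exact: (@coord_continuous R 1 n ord0 i).
Qed.

Lemma series_EFin (R : realType) (f : nat -> R) : cvgn (series f) ->
  (\sum_(k <oo) (f k)%:E)%E = (limn (series f))%:E.
Proof.
move=> cf; rewrite -EFin_lim //.
suff -> : (fun n => (\sum_(0 <= k < n) (f k)%:E)%E) = EFin \o series f by [].
by apply/funext => N; rewrite /series /= sumEFin.
Qed.

Lemma expR_series (R : realType) (y : R) :
  (expR y)%:E = (\sum_(k <oo) (y ^+ k / k`!%:R)%:E)%E.
Proof.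
by rewrite (@series_EFin _ (exp_coeff y) (is_cvg_series_exp_coeff y)).

Qed.

Lemma bsum (R : realType) (A q : R) : 0 <= q < 1 ->
  (\sum_(k <oo) (2 * (A ^+ k / k`!%:R) + q ^+ k)%:E)%E =
  (2 * expR A + (1 - q)^-1)%:E.
Proof.
case/andP=> q0 q1.
have cg : series (geometric 1 q) @ \oo --> (1 * (1 - q)^-1).
  by apply: cvg_geometric_series; rewrite ger0_norm.
have ce := is_cvg_series_exp_coeff A.
have ce2 := @is_cvg_seriesZ _ _ (2:R) ce.
have cgg : cvgn (series (geometric 1 q)) by apply/cvg_ex; eexists; exact: cg.
transitivity (\sum_(k <oo) ((2 *: exp_coeff A + geometric 1 q) k)%:E)%E.
  by apply: eq_eseriesr => k _; rewrite /= !fctE /= mul1r.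
rewrite series_EFin; last exact: is_cvg_seriesD.
rewrite lim_seriesD // lim_seriesZ // (cvg_lim _ cg) // mul1r.
by []. Qed.

Lemma pw_bound (R : realType) (A y t : R) (k : nat) : 0 < A -> 0 <= y -> k%:R < t ->
  y ^+ k / k`!%:R <= A ^+ k / k`!%:R * (1 + (y / A) `^ t).
Proof.
move=> A0 y0 kt.
set z := y / A.
have ey : y = A * z by rewrite /z mulrC divfK // gt_eqF.
have z0 : 0 <= z by rewrite /z divr_ge0 // ltW.
rewrite mulrAC ler_pM2r ?invr_gt0 ?ltr0n ?fact_gt0 //.
rewrite {1}ey exprMn ler_pM2l ?exprn_gt0 //.
have [z1|z1] := leP z 1.
  by apply: le_trans (exprn_ile1 _ z0 z1) _; rewrite lerDl powR_ge0.
apply: (@le_trans _ _ (z `^ t)); last by rewrite lerDr.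
rewrite -powR_mulrn // ler_powR ?ltW //.
Qed.

Section expint.
Context d (T : measurableType d) (R : realType) (mu : probability T R).

Lemma exp_int_bound (Y : T -> R) (A q t : R) :
  measurable_fun setT Y -> (forall x, 0 <= Y x) -> 0 < A -> 0 <= q < 1 ->
  (\int[mu]_x ((Y x / A) `^ t)%:E <= 1)%E ->
  (forall k : nat, t <= k%:R -> (\int[mu]_x ((Y x ^+ k / k`!%:R)%:E) <= (q ^+ k)%:E)%E) ->
  (\int[mu]_x (expR (Y x))%:E <= (2 * expR A + (1 - q)^-1)%:E)%E.
Proof.
move=> mY Y0 A0 q01 H1 H2.
have mk k : measurable_fun [set: T] (fun x : T => ((Y x ^+ k / k`!%:R)%:E : \bar R)).
  apply/measurable_EFinP; apply: measurable_realfun.measurable_funM.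
    exact: measurable_funX.
  exact: measurable_cst.
have k0 k x : (0 <= (Y x ^+ k / k`!%:R)%:E)%E.
  by rewrite lee_fin divr_ge0 // exprn_ge0.
under eq_integral do rewrite expR_series.
rewrite integral_nneseries //.
case/andP: (q01) => q0 q1.
rewrite -bsum //; apply: lee_nneseries => [k _ _|k _]; first exact: integral_ge0.
have [tk|kt] := leP t k%:R.
  apply: le_trans (H2 k tk) _; rewrite lee_fin lerDr mulr_ge0 // divr_ge0 //.
  by rewrite exprn_ge0 // ltW.
have cA : 0 <= A ^+ k / k`!%:R by rewrite divr_ge0 // exprn_ge0 // ltW.
have mP : measurable_fun setT (fun x => ((Y x / A) `^ t)%:E).
  apply/measurable_EFinP; apply: (measurableT_comp (measurable_powR t)) => /=.
  apply: measurable_realfun.measurable_funM => //; exact: measurable_cst.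
apply: (@le_trans _ _ (\int[mu]_x ((A ^+ k / k`!%:R)%:E * (1%:E + ((Y x / A) `^ t)%:E)))%E).
  apply: ge0_le_integral => //.
    apply: emeasurable_funM; first exact: measurable_cst.
    apply: emeasurable_funD => //; exact: measurable_cst.
  by move=> x _; rewrite -EFinD -EFinM lee_fin pw_bound.
rewrite ge0_integralZl_EFin //; try (by move=> x _; rewrite adde_ge0 // lee_fin powR_ge0); try (apply: emeasurable_funD => //; exact: measurable_cst).
rewrite ge0_integralD //; try (by move=> x _; rewrite lee_fin powR_ge0); try exact: measurable_cst.
have -> : (\int[mu]_x (1%:E : \bar R) = 1)%E.
  by move: (integral_cst mu measurableT 1%E) => ->; rewrite mul1e; exact: probability_setT.
apply: (@le_trans _ _ ((A ^+ k / k`!%:R)%:E * 2%:E))%E.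
  apply: lee_wpmul2l; first by rewrite lee_fin.
  by rewrite (_ : 2%:E = 1%:E + 1%:E) ?leeD2l // -EFinD.
by rewrite -EFinM lee_fin mulrC lerDl exprn_ge0.
Qed.

End expint.

Lemma kk_fact (R : realType) (k : nat) : (k%:R : R) ^+ k / k`!%:R <= expR 1 ^+ k.
Proof.
rewrite -expRM_natl mulr1.
case: k => [|m]; first by rewrite expr0 fact0 divr1 expR0.
apply: le_trans (expR_ge1Dxn m (ler0n _ _)); rewrite lerDr //.
Qed.

Lemma tail_real (R : realType) (al lam m A t r : R) (k : nat) :
  0 < al -> 0 < t -> 0 <= lam -> 0 <= m -> lam * m <= A ->
  A = 3 * t / (5 * expR 1 * al) ->
  0 <= r -> r <= (al * k%:R / t * m) ^+ k ->
  lam ^+ k / k`!%:R * r <= (3/5) ^+ k.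
Proof.
move=> al0 t0 lam0 m0 lmA HA r0 rb; rewrite HA in lmA.
set b := al * k%:R / t * m.
have b0 : 0 <= b by rewrite /b !mulr_ge0 // ?invr_ge0 ltW.
have e0 : 0 < expR 1 :> R by exact: expR_gt0.
have lb : lam * b <= 3 * k%:R / (5 * expR 1).
  have -> : lam * b = al * k%:R / t * (lam * m) by rewrite /b; ring.
  apply: le_trans (ler_wpM2l _ lmA) _.
    by rewrite !mulr_ge0 // ?invr_ge0 ?ltW // ?divr_ge0 // ?ltW.
  rewrite le_eqVlt; apply/orP; left; apply/eqP; field.
  by rewrite !gt_eqF.
have f0 : 0 < k`!%:R :> R by rewrite ltr0n fact_gt0.
apply: (@le_trans _ _ (lam ^+ k / k`!%:R * b ^+ k)).
  by rewrite ler_wpM2l // divr_ge0 ?exprn_ge0 // ltW.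
rewrite mulrAC -exprMn.
apply: (@le_trans _ _ ((3 * k%:R / (5 * expR 1)) ^+ k / k`!%:R)).
  apply: ler_wpM2r; first by rewrite invr_ge0 ltW.
  by apply: lerXn2r => //; rewrite nnegrE mulr_ge0.
have -> : (3 * k%:R / (5 * expR 1)) ^+ k / k`!%:R =
   (3/5) ^+ k * ((k%:R ^+ k / k`!%:R) / expR 1 ^+ k) :> R.
  rewrite (_ : 3 * k%:R / (5 * expR 1) = (3/5) * (k%:R / expR 1)); last first.
    by field; rewrite !gt_eqF.
  rewrite exprMn (expr_div_n (k%:R : R)) -!mulrA; congr (_ * (_ * _)); exact: mulrC.
rewrite ler_piMr ?exprn_ge0 // ?divr_ge0 //.
by rewrite ler_pdivrMr ?exprn_gt0 // mul1r kk_fact.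
Qed.

Section main.
Variables (R : realType) (n : nat) (mu : probability (Rn R n) R).

Lemma dotpZr (u v : 'rV[R]_n) k : dotp u (k *: v) = k * dotp u v.
Proof.
by rewrite /dotp mulr_sumr; apply: eq_bigr => i _; rewrite mxE mulrCA.
Qed.

Lemma dotpZl (u v : 'rV[R]_n) k : dotp (k *: u) v = k * dotp u v.
Proof.
by rewrite /dotp mulr_sumr; apply: eq_bigr => i _; rewrite mxE mulrA.
Qed.

Lemma dotpC (u v : 'rV[R]_n) : dotp u v = dotp v u.
Proof. by apply: eq_bigr => i _; rewrite mulrC. Qed.

Lemma mabs (w : 'rV[R]_n) : measurable_fun (setT : set (Rn R n)) (fun x => `|dotp w x|).
Proof. apply: measurableT_comp => //; exact: dotp_meas. Qed.

Lemma mabs_pow (w : 'rV[R]_n) s :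
  measurable_fun (setT : set (Rn R n)) (fun x => ((`|dotp w x| `^ s)%:E : \bar R)).
Proof.
apply/measurable_EFinP; exact: (measurableT_comp (measurable_powR s) (mabs w)).
Qed.

Lemma moment_ge0 s w : (0 <= moment mu s w)%E.
Proof. by apply: integral_ge0 => x _; rewrite lee_fin powR_ge0. Qed.


Lemma tail_int (al t lam A M : R) (w : 'rV[R]_n) (k : nat) :
  regular mu al -> 0 < al -> 2 <= t -> t <= k%:R -> 0 <= lam ->
  moment mu t w = M%:E -> lam * M `^ t^-1 <= A -> A = 3 * t / (5 * expR 1 * al) ->
  (\int[mu]_x (((lam * `|dotp w x|) ^+ k / k`!%:R)%:E) <= ((3/5) ^+ k)%:E)%E.
Proof.
move=> reg al0 t2 tk lam0 HM lmA HA.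
have t0 : 0 < t by lra.
have k0 : 0 < k%:R :> R by lra.
have f0 : 0 < k`!%:R :> R by rewrite ltr0n fact_gt0.
have -> : (\int[mu]_x (((lam * `|dotp w x|) ^+ k / k`!%:R)%:E) =
    (lam ^+ k / k`!%:R)%:E * moment mu k%:R w)%E.
  rewrite /moment -ge0_integralZl_EFin //; try (by move=> x _; rewrite lee_fin powR_ge0); try exact: mabs_pow; try (by rewrite divr_ge0 ?exprn_ge0 // ltW).
  apply: eq_integral => x _; rewrite -EFinM powR_mulrn // exprMn.
  by rewrite mulrAC.
have := reg k%:R t t2 tk w; rewrite HM poweR_EFin.
have Mk0 := moment_ge0 k%:R w.
case: (moment mu k%:R w) Mk0 => [r| |] // r0 reg'.
  rewrite poweR_EFin -EFinM lee_fin in reg'.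
  rewrite -EFinM lee_fin.
  rewrite lee_fin in r0.
  have := @tail_real R al lam (M `^ t^-1) A t r k al0 t0 lam0 (powR_ge0 _ _) lmA HA r0. apply.
  have -> : r = (r `^ (k%:R)^-1) ^+ k.
    by rewrite -powR_mulrn ?powR_ge0 // -powRrM mulVf ?gt_eqF // powRr1.
  apply: lerXn2r => //; rewrite nnegrE ?powR_ge0 //.
  by rewrite (le_trans (powR_ge0 _ _) reg').
rewrite poweRyr ?invr_eq0 ?gt_eqF // in reg'.
Qed.

Lemma head_int (t lam A M : R) (w : 'rV[R]_n) :
  0 < t -> 0 <= lam -> 0 < A -> moment mu t w = M%:E -> lam * M `^ t^-1 <= A ->
  (\int[mu]_x (((lam * `|dotp w x|) / A) `^ t)%:E <= 1)%E.
Proof.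
move=> t0 lam0 A0 HM lmA.
have M0 : 0 <= M by rewrite -lee_fin -HM moment_ge0.
have -> : (\int[mu]_x (((lam * `|dotp w x|) / A) `^ t)%:E =
    ((lam / A) `^ t)%:E * moment mu t w)%E.
  rewrite /moment -ge0_integralZl_EFin //; try (by move=> x _; rewrite lee_fin powR_ge0); try exact: mabs_pow; try exact: powR_ge0.
  apply: eq_integral => x _; rewrite -EFinM mulrAC (powRM _ (divr_ge0 lam0 (ltW A0)) (normr_ge0 _)).
  by [].
rewrite HM -EFinM lee_fin.
have -> : M = (M `^ t^-1) `^ t by rewrite -powRrM mulVf ?gt_eqF // powRr1.
rewrite -powRM ?powR_ge0 //; last by rewrite divr_ge0 // ltW.
rewrite (_ : 1 = 1 `^ t); last by rewrite powR1.
apply: ge0_ler_powR; rewrite ?nnegrE ?mulr_ge0 ?divr_ge0 ?powR_ge0 //; try exact: ltW.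
  by rewrite invr_ge0 ltW.
by rewrite mulrAC ler_pdivrMr // mul1r.
Qed.

Lemma key (al t M lam : R) (v w : 'rV[R]_n) :
  1 <= al -> regular mu al -> 2 <= t -> (cramer mu v <= t%:E)%E ->
  moment mu t w = M%:E -> 0 < lam -> lam * M `^ t^-1 <= 3 * t / (5 * expR 1 * al) ->
  lam * `|dotp w v| <= 12 / 5 * t.
Proof.
move=> al1 reg t2 cv HM lam0 lmA.
set A := 3 * t / (5 * expR 1 * al) in lmA.
have al0 : 0 < al by lra.
have t0 : 0 < t by lra.
have e2 : 2 <= expR 1 :> R by have := expR_ge1Dx (1:R); lra.
have e0 : 0 < expR 1 :> R := expR_gt0 1.
have A0 : 0 < A by rewrite /A divr_gt0 ?mulr_gt0 //; lra.
have hA : A * (5 * expR 1 * al) = 3 * t by rewrite /A divfK // gt_eqF // !mulr_gt0 //; lra.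
have A10 : A <= 3 * t / 10.
  have h10 : 10 <= 5 * expR 1 * al.
    have : 2 * 1 <= expR 1 * al by apply: ler_pM => //; lra.
    rewrite -mulrA; lra.
  have : A * 10 <= 3 * t by rewrite -hA ler_wpM2l // ltW.
  lra.
have expb : (\int[mu]_x (expR (lam * `|dotp w x|))%:E <=
             (2 * expR A + (1 - 3/5)^-1)%:E)%E.
  apply: (@exp_int_bound _ _ _ mu (fun x => lam * `|dotp w x|) A (3/5) t).
  - apply: measurable_funM; [exact: measurable_cst | exact: mabs].
  - by move=> x; rewrite mulr_ge0 // ltW.
  - exact: A0.
  - apply/andP; split; lra.
  - exact: (head_int t lam A M w t0 (ltW lam0) A0 HM lmA).
  - move=> k tk; exact: (tail_int al t lam A M w k reg al0 t2 tk (ltW lam0) HM lmA erefl).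
have eb : 2 * expR A + (1 - 3/5)^-1 <= expR (A + 2).
  rewrite expRD.
  have eh : 3/2 <= expR (2^-1) :> R by have := expR_ge1Dx (2^-1 : R); lra.
  have e4 : (3/2)^+4 <= expR (2^-1) ^+ 4 :> R.
    by apply: lerXn2r => //; rewrite nnegrE //; lra.
  rewrite -expRM_natl (_ : 4%:R * 2^-1 = 2 :> R) in e4; last by field.
  have eA : 1 <= expR A by have := expR_ge1Dx A; lra.
  have : expR A * (81/16) <= expR A * expR 2.
    apply: ler_wpM2l; first lra.
    by apply: le_trans e4; rewrite le_eqVlt; apply/orP; left; apply/eqP; field.
  have -> : (1 - 3/5 : R)^-1 = 5/2 by field.
  lra.
set a := dotp w v.
pose s : R := if 0 <= a then 1 else -1.
pose u := (s * lam) *: w.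
have du : dotp v u = lam * `|a|.
  rewrite /u dotpZr dotpC -/a /s; case: ifPn => h.
    by rewrite mul1r ger0_norm.
  by rewrite -ltNge in h; rewrite ltr0_norm // mulN1r mulNr mulrN.
have dux x : dotp u x <= lam * `|dotp w x|.
  rewrite /u dotpZl -mulrA mulrCA ler_pM2l //; rewrite /s; case: ifPn => _.
    by rewrite mul1r ler_norm.
  by rewrite mulN1r -normrN ler_norm.
have Iu : (\int[mu]_x (expR (dotp u x))%:E <= (expR (A + 2))%:E)%E.
  apply: le_trans (le_trans expb _); last by rewrite lee_fin.
  apply: ge0_le_integral => //; try (by move=> x _; rewrite lee_fin expR_ge0);
    try (by move=> x _; rewrite lee_fin ler_expR dux);
    try (apply/measurable_EFinP; exact: (measurableT_comp (@measurable_expR R) (@dotp_meas R n u)));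
    try (apply/measurable_EFinP; apply: (measurableT_comp (@measurable_expR R));
      apply: measurable_funM; [exact: measurable_cst | exact: mabs]).
have I0 : (0 <= \int[mu]_x (expR (dotp u x))%:E)%E.
  by apply: integral_ge0 => x _; rewrite lee_fin expR_ge0.
have LL : (logLaplace mu u <= (A + 2)%:E)%E.
  rewrite /logLaplace.
  move: Iu I0.
  case: (\int[mu]_x (expR (dotp u x))%:E)%E => [r| |] // Ir _.
  rewrite lee_fin in Ir; rewrite lee_fin.
  have [r1|r1] := leP r 1.
    by apply: le_trans (ln_le0 r1) _; lra.
  rewrite -[X in _ <= X]expRK ler_ln // posrE ?expR_gt0 //; lra.
have cr : ((dotp v u)%:E - logLaplace mu u <= cramer mu v)%E.
  by apply: ereal_sup_ubound; exists u.
have : ((lam * `|a|)%:E - (A + 2)%:E <= t%:E)%E.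
  apply: le_trans cv; apply: le_trans cr; rewrite du; exact: leeB.
rewrite -EFinB lee_fin => h.
lra.
Qed.

End main.

Theorem proposition2p3 (R : realType) (n : nat) (mu : probability (Rn R n) R)
  (alpha : R) :
  1 <= alpha -> regular mu alpha ->
  forall t : R, 2 <= t ->
    Bt mu t `<=` [set (4 * expR 1 * alpha) *: z | z in Zt mu t].
Proof.
move=> al1 reg t t2 v Bv.
have e0 : 0 < expR 1 :> R := expR_gt0 1.
have t0 : 0 < t by lra.
have al0 : 0 < alpha by lra.
set c := 4 * expR 1 * alpha.
have c0 : 0 < c by rewrite /c !mulr_gt0.
exists (c^-1 *: v); last by rewrite scalerA mulfV ?gt_eqF // scale1r.
move=> w.
have M0 := @moment_ge0 R n mu t w.
case HM: (moment mu t w) M0 => [M| |] // M0; last by rewrite leey.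
rewrite lee_fin in M0.
rewrite dotpZr lee_fin normrM ger0_norm; last by rewrite invr_ge0 ltW.
set m := M `^ t^-1.
have m0 : 0 <= m by exact: powR_ge0.
set A := 3 * t / (5 * expR 1 * alpha).
have A0 : 0 < A by rewrite /A divr_gt0 ?mulr_gt0 //; lra.
have Ac : A * c = 12 / 5 * t by rewrite /A /c; field; rewrite !gt_eqF.
have key' := @key R n mu alpha t M _ v w al1 reg t2 Bv HM.
have am : `|dotp w v| <= c * m.
  have [mp|] := ltP 0 m.
    have := key' (A / m) (divr_gt0 A0 mp).
    rewrite -/m divfK ?gt_eqF // lexx => /(_ isT) h.
    have h2 : `|dotp w v| * A <= A * c * m.
      rewrite Ac; rewrite -(ler_pM2r mp) in h.
      apply: le_trans h; rewrite le_eqVlt; apply/orP; left; apply/eqP.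
      by rewrite [RHS]mulrAC divfK ?gt_eqF // mulrC.
    by rewrite -mulrA [A * _]mulrC ler_pM2r // in h2.
  rewrite le_eqVlt ltNge m0 orbF => /eqP m00.
  rewrite m00 mulr0.
  have [ap|] := ltP 0 `|dotp w v|; last by [].
  have lp : 0 < (12 / 5 * t + 1) / `|dotp w v| by rewrite divr_gt0 //; lra.
  have := key' _ lp; rewrite -/m m00 mulr0 ltW // divfK ?gt_eqF // => /(_ isT).
  lra.
have -> : M = m `^ t by rewrite /m -powRrM mulVf ?gt_eqF // powRr1.
apply: ge0_ler_powR; rewrite ?nnegrE ?mulr_ge0 ?invr_ge0 //; try exact: ltW.
by rewrite ler_pdivrMl.
Qed.
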